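(* Let $G$ be a circle of circumference $1$ and $n\ge1$. The mechanism $M$ (LRM when the agents lie on one semicircle, RC otherwise) is strategyproof, and for every $\mathbf{x}\in G^n$, $\mathrm{mc}(M(\mathbf{x}),\mathbf{x})\le\frac32\min_{y\in G}\mathrm{mc}(y,\mathbf{x})$.
   Context: $G$ is a circle of circumference $1$; $d(x,y)$ is the length of the shorter arc between $x,y$; $\hat{x}$ denotes the antipodal point of $x$. Agents $N=\{1,\dots,n\}$ have locations $\mathbf{x}\in G^n$. For a distribution $P$ on $G$: $\mathrm{cost}(P,x_i)=\mathbb{E}_{y\sim P}[d(x_i,y)]$ and $\mathrm{mc}(P,\mathbf{x})=\mathbb{E}_{y\sim P}[\max_{i}d(y,x_i)]$. A mechanism $f:G^n\to\Delta(G)$ is strategyproof if $\mathrm{cost}(f(x_i',\mathbf{x}_{-i}),x_i)\ge\mathrm{cost}(f(\mathbf{x}),x_i)$ for all $\mathbf{x},i,x_i'$. The agents are on one semicircle if all $x_i$ lie in some closed arc of length $1/2$. LRM mechanism (used when agents are on one semicircle): fix a closed arc of minimal length containing all $x_i$ (its length is at most $1/2$; its endpoints $l,r$ are agent locations); return $l$ with probability $1/4$, $r$ with probability $1/4$, and the midpoint $\mathrm{cen}(l,r)$ of that arc with probability $1/2$. RC (Random Center) mechanism (used when agents are not on one semicircle): the antipodal points $\hat{x}_1,\dots,\hat{x}_n$ partition $G$ into arcs between cyclically consecutive antipodal points; choose a point $y$ uniformly at random on $G$ and return the midpoint of the arc of this partition containing $y$ (equivalently, return the midpoint of each such arc with probability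 equal to its length). $M(\mathbf{x})=\mathrm{lrm}(\mathbf{x})$ if agents are on one semicircle and $M(\mathbf{x})=\mathrm{rc}(\mathbf{x})$ otherwise. *)

(* Defs.v *)
From Stdlib Require Import Reals Lra Lia List Sorting.Sorted Permutation.
Import ListNotations.
Open Scope R_scope.

(* The circle G of circumference 1 is R/Z; points are represented by reals,
   and everything below only depends on them modulo 1.  Agent profiles are
   taken with representatives in [0,1). *)

Definition ccw (a b : R) : R := frac_part (b - a).

Definition dist (x y : R) : R := Rmin (frac_part (x - y)) (1 - frac_part (x - y)).

Definition antip (x : R) : R := frac_part (x + /2).

Definition valid_profile (n : nat) (x : nat -> R) : Prop :=
  forall i, (i < n)%nat -> 0 <= x i < 1.

Definition deviate (x : nat -> R) (i : nat) (v : R) : nat -> R :=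
  fun j => if Nat.eqb j i then v else x j.

(* Finite-support distributions on G: lists of (probability, point). *)
Definition dist_G := list (R * R).

Definition expect (P : dist_G) (f : R -> R) : R :=
  fold_right (fun py acc => fst py * f (snd py) + acc) 0 P.

Definition cost (P : dist_G) (xi : R) : R := expect P (fun y => dist xi y).

Fixpoint maxdist (x : nat -> R) (k : nat) (y : R) : R :=
  match k with
  | O => 0
  | S k' => Rmax (maxdist x k' y) (dist y (x k'))
  end.

Definition mc_pt (n : nat) (x : nat -> R) (y : R) : R := maxdist x n y.

Definition mc (n : nat) (P : dist_G) (x : nat -> R) : R :=
  expect P (fun y => mc_pt n x y).

Definition in_arc (l L y : R) : Prop := ccw l y <= L.

Definition all_in_arc (n : nat) (x : nat -> R) (l L : R) : Prop :=
  forall i, (i < n)%nat -> in_arc l L (x i).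

Definition on_one_semicircle (n : nat) (x : nat -> R) : Prop :=
  exists c, all_in_arc n x c (/2).

Definition minimal_arc (n : nat) (x : nat -> R) (l r : R) : Prop :=
  (exists i, (i < n)%nat /\ x i = l) /\
  (exists j, (j < n)%nat /\ x j = r) /\
  all_in_arc n x l (ccw l r) /\
  (forall l' L', 0 <= L' -> all_in_arc n x l' L' -> ccw l r <= L').

(* P is an output of LRM at x (for some choice of minimal arc). *)
Definition lrm (n : nat) (x : nat -> R) (P : dist_G) : Prop :=
  exists l r, minimal_arc n x l r /\
    P = [(/4, l); (/4, r); (/2, l + ccw l r / 2)].

(* RC: given the sorted list s of antipodal points, the arcs between
   cyclically consecutive ones; output each arc midpoint with probability
   equal to the arc length. *)
Fixpoint rc_inner (s : list R) : dist_G :=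
  match s with
  | a :: ((b :: _) as t) => (b - a, (a + b) / 2) :: rc_inner t
  | _ => []
  end.

Definition rc_of_sorted (s : list R) : dist_G :=
  match s with
  | [] => []
  | a0 :: _ =>
      let z := last s a0 in
      rc_inner s ++ [(a0 + 1 - z, (z + a0 + 1) / 2)]
  end.

Definition rc (n : nat) (x : nat -> R) (P : dist_G) : Prop :=
  exists s, Permutation s (map (fun j => antip (x j)) (seq 0 n)) /\
            Sorted Rle s /\ P = rc_of_sorted s.

Definition M_out (n : nat) (x : nat -> R) (P : dist_G) : Prop :=
  (on_one_semicircle n x /\ lrm n x P) \/
  (~ on_one_semicircle n x /\ rc n x P).

(* Main.v *)
Require Import Defs.
From Stdlib Require Import Reals Lra Lia List Sorting.Sorted Permutation Classical ZArith.
Require Import Defs.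
Import ListNotations.
Open Scope R_scope.

Lemma frac_range x : 0 <= frac_part x < 1.
Proof. destruct (base_fp x); lra. Qed.

Lemma frac_spec x k : IZR k <= x < IZR k + 1 -> frac_part x = x - IZR k /\ Int_part x = k.
Proof.
  intros H.
  destruct (Int_part_frac_part_spec x k (x - IZR k)) as [H1 H2]; [lra|ring|].
  split; auto.
Qed.

Lemma frac_eq x k : IZR k <= x < IZR k + 1 -> frac_part x = x - IZR k.
Proof. intros H; apply (frac_spec x k H). Qed.

Lemma frac_decomp x : x = IZR (Int_part x) + frac_part x.
Proof. apply Rplus_Int_part_frac_part. Qed.

Lemma frac_shift x k : frac_part (x + IZR k) = frac_part x /\ Int_part (x + IZR k) = (Int_part x + k)%Z.
Proof.
  pose proof (frac_range x) as Hr. pose proof (frac_decomp x) as Hd.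
  assert (H: IZR (Int_part x + k) <= x + IZR k < IZR (Int_part x + k) + 1).
  { rewrite plus_IZR. lra. }
  destruct (frac_spec _ _ H) as [A B]. split; auto.
  rewrite A, plus_IZR. lra.
Qed.

Lemma frac_id x : 0 <= x < 1 -> frac_part x = x.
Proof. intros H. rewrite (frac_eq x 0); simpl; lra. Qed.

Lemma frac_id1 x : 1 <= x < 2 -> frac_part x = x - 1.
Proof. intros H. rewrite (frac_eq x 1); simpl; lra. Qed.

Lemma frac_idm1 x : -1 <= x < 0 -> frac_part x = x + 1.
Proof. intros H. rewrite (frac_eq x (-1)); simpl; lra. Qed.

Definition D (t : R) : R := Rmin (frac_part t) (1 - frac_part t).

Lemma dist_D x y : dist x y = D (x - y).
Proof. reflexivity. Qed.

Lemma IZR_int_small m : Rabs (IZR m) < 1 -> m = 0%Z.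
Proof.
  intros H. destruct (Z.lt_trichotomy m 0) as [h|[h|h]]; auto.
  - assert (IZR m <= -1).
    { change (-1) with (IZR (-1)). apply IZR_le. lia. }
    rewrite Rabs_left in H; lra.
  - assert (IZR m >= 1). { change 1 with (IZR 1). apply IZR_ge. lia. }
    rewrite Rabs_right in H; lra.
Qed.

Lemma D_le t k : D t <= Rabs (t - IZR k).
Proof.
  unfold D. pose proof (frac_range t) as Hr. pose proof (frac_decomp t) as Hd.
  set (f := frac_part t) in *. set (m := (Int_part t - k)%Z).
  assert (Hm : t - IZR k = f + IZR m) by (unfold m; rewrite minus_IZR; lra).
  rewrite Hm.
  destruct (Z.lt_trichotomy m 0) as [h|[h|h]].
  - assert (IZR m <= -1) by (change (-1) with (IZR (-1)); apply IZR_le; lia).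
    rewrite Rabs_left by lra. apply Rle_trans with (1 - f); [apply Rmin_r|lra].
  - rewrite h. simpl. rewrite Rplus_0_r, Rabs_right by lra. apply Rmin_l.
  - assert (IZR m >= 1) by (change 1 with (IZR 1); apply IZR_ge; lia).
    rewrite Rabs_right by lra. apply Rle_trans with (1 - f); [apply Rmin_r|lra].
Qed.

Lemma D_eq t : exists k, D t = Rabs (t - IZR k).
Proof.
  unfold D. pose proof (frac_range t) as Hr. pose proof (frac_decomp t) as Hd.
  destruct (Rle_dec (frac_part t) (1 - frac_part t)).
  - exists (Int_part t). rewrite Rmin_left by lra. rewrite Rabs_right; lra.
  - exists (Int_part t + 1)%Z. rewrite Rmin_right by lra. rewrite plus_IZR.
    rewrite Rabs_left; lra.
Qed.

Lemma D_range t : 0 <= D t <= 1/2.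
Proof.
  unfold D. pose proof (frac_range t). unfold Rmin; destruct Rle_dec; lra.
Qed.

Lemma D_exact t k : Rabs (t - IZR k) <= 1/2 -> D t = Rabs (t - IZR k).
Proof.
  intros H. destruct (D_eq t) as [k' Hk']. pose proof (D_le t k).
  destruct (Req_dec (Rabs (t - IZR k')) (Rabs (t - IZR k))) as [e|ne]; [lra|].
  assert (Rabs (t - IZR k') < Rabs (t - IZR k)) by lra.
  assert (Hs: Rabs (IZR (k - k')) < 1).
  { rewrite minus_IZR. replace (IZR k - IZR k') with ((t - IZR k') - (t - IZR k)) by ring.
    eapply Rle_lt_trans; [apply Rabs_triang|]. rewrite Rabs_Ropp. lra. }
  apply IZR_int_small in Hs. assert (k = k') by lia. subst. lra.
Qed.
Lemma D_ge t c : (forall k, c <= Rabs (t - IZR k)) -> c <= D t.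
Proof. intros H. destruct (D_eq t) as [k Hk]. rewrite Hk. apply H. Qed.

Lemma D_per t k : D (t + IZR k) = D t.
Proof.
  apply Rle_antisym.
  - destruct (D_eq t) as [k' Hk']. rewrite Hk'.
    replace (t - IZR k') with (t + IZR k - IZR (k' + k)) by (rewrite plus_IZR; ring). apply D_le.
  - destruct (D_eq (t + IZR k)) as [k' Hk']. rewrite Hk'.
    replace (t + IZR k - IZR k') with (t - IZR (k' - k)) by (rewrite minus_IZR; ring). apply D_le.
Qed.

Lemma D_sym t : D (- t) = D t.
Proof.
  apply Rle_antisym.
  - destruct (D_eq t) as [k' Hk']. rewrite Hk'.
    replace (Rabs (t - IZR k')) with (Rabs (- t - IZR (- k'))).
    apply D_le. rewrite opp_IZR, <- Rabs_Ropp. f_equal; ring.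
  - destruct (D_eq (-t)) as [k' Hk']. rewrite Hk'.
    replace (Rabs (-t - IZR k')) with (Rabs (t - IZR (- k'))).
    apply D_le. rewrite opp_IZR, <- Rabs_Ropp. f_equal; ring.
Qed.

Lemma D_tri a b : D (a + b) <= D a + D b.
Proof.
  destruct (D_eq a) as [ka Ha]. destruct (D_eq b) as [kb Hb].
  eapply Rle_trans. apply (D_le _ (ka + kb)). rewrite Ha, Hb, plus_IZR.
  replace (a + b - (IZR ka + IZR kb)) with ((a - IZR ka) + (b - IZR kb)) by ring.
  apply Rabs_triang.
Qed.

Lemma D_half t : D (t - 1/2) = 1/2 - D t.
Proof.
  destruct (D_eq t) as [k Hk]. pose proof (D_range t). pose proof (D_le t k).
  destruct (Rle_dec 0 (t - IZR k)).
  - rewrite Rabs_right in Hk by lra. rewrite (D_exact _ k). rewrite Rabs_left1; lra.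
    rewrite Rabs_left1; lra.
  - rewrite Rabs_left in Hk by lra. rewrite (D_exact _ (k-1)); rewrite minus_IZR.
    rewrite Rabs_right; simpl; lra. rewrite Rabs_right; simpl; lra.
Qed.

Lemma D_small t : Rabs t <= 1/2 -> D t = Rabs t.
Proof. intros H. rewrite (D_exact t 0); simpl; rewrite Rminus_0_r; auto. Qed.

Lemma D_le_abs t : D t <= Rabs t.
Proof. pose proof (D_le t 0). simpl in H. rewrite Rminus_0_r in H. auto. Qed.

Lemma dist_sym x y : dist x y = dist y x.
Proof. rewrite !dist_D. replace (y - x) with (- (x - y)) by ring. rewrite D_sym; auto. Qed.

Lemma dist_tri x y z : dist x z <= dist x y + dist y z.
Proof. rewrite !dist_D. replace (x - z) with ((x - y) + (y - z)) by ring. apply D_tri. Qed.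

Lemma dist_range x y : 0 <= dist x y <= 1/2.
Proof. apply D_range. Qed.

Lemma dist_refl x : dist x x = 0.
Proof. rewrite dist_D. replace (x - x) with 0 by ring. rewrite D_small; rewrite Rabs_R0; lra. Qed.

Lemma dist_shift x y k : dist x (y + IZR k) = dist x y.
Proof. rewrite !dist_D. replace (x - (y + IZR k)) with ((x - y) + IZR (-k)) by (rewrite opp_IZR; ring).
  apply D_per. Qed.

Lemma dist_frac_l x y : dist (frac_part x) y = dist x y.
Proof. rewrite dist_sym, (dist_sym x). rewrite (frac_decomp x) at 2.
  rewrite Rplus_comm, dist_shift. auto. Qed.

Lemma dist_frac_r x y : dist x (frac_part y) = dist x y.
Proof. rewrite dist_sym, dist_frac_l, dist_sym; auto. Qed.

Lemma dist_antip z u : dist z (antip u) = 1/2 - dist z u.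
Proof.
  unfold antip. rewrite dist_frac_r, !dist_D.
  replace (z - (u + /2)) with ((z - u) - 1/2) by field. apply D_half.
Qed.

Lemma dist_ccw l u v : dist u v = D (ccw l u - ccw l v).
Proof.
  unfold ccw. rewrite dist_D.
  replace (u - v) with ((frac_part (u - l) - frac_part (v - l)) + IZR (Int_part (u - l) - Int_part (v - l))).
  apply D_per. rewrite minus_IZR.
  pose proof (frac_decomp (u - l)). pose proof (frac_decomp (v - l)). lra.
Qed.

Lemma dist_add l t u : dist (l + t) u = D (t - ccw l u).
Proof.
  rewrite dist_D. unfold ccw. pose proof (frac_decomp (u - l)).
  replace (l + t - u) with ((t - frac_part (u - l)) + IZR (- Int_part (u - l))).
  apply D_per. rewrite opp_IZR. lra.
Qed.

Lemma ccw_range l u : 0 <= ccw l u < 1.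
Proof. apply frac_range. Qed.
Definition hprim (u : R) : R := if Rle_dec u (1/2) then u*u/2 else 1/4 - (1-u)*(1-u)/2.
Definition Psi (t : R) : R := IZR (Int_part t) / 4 + hprim (frac_part t).
Definition Ev (g d : R) : R := Rsqr (Rmax 0 (d - (1-g)/2)) - Rsqr (Rmax 0 (g/2 - d)).

Lemma Psi_shift t k : Psi (t + IZR k) = Psi t + IZR k / 4.
Proof. unfold Psi. destruct (frac_shift t k) as [A B]. rewrite A, B, plus_IZR. lra. Qed.

Lemma LOC0 t1 t2 : 0 <= t1 < 1 -> t1 <= t2 <= t1 + 1/2 ->
  (t2 - t1) * D ((t1+t2)/2) = Psi t2 - Psi t1 + Ev (t2-t1) (D ((t1+t2)/2)).
Proof.
  intros H1 H2.
  assert (P1 : Psi t1 = hprim t1).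
  { unfold Psi. destruct (frac_spec t1 0) as [A B]; [simpl; lra|]. rewrite A, B. simpl. replace (t1 - 0) with t1 by ring. lra. }
  assert (P2 : (t2 < 1 /\ Psi t2 = hprim t2) \/ (1 <= t2 /\ Psi t2 = 1/4 + hprim (t2 - 1))).
  { destruct (Rlt_dec t2 1).
    - left. split; auto. unfold Psi. destruct (frac_spec t2 0) as [A B]; [simpl; lra|]. rewrite A, B. simpl. replace (t2 - 0) with t2 by ring. lra.
    - right. split; [lra|]. unfold Psi. destruct (frac_spec t2 1) as [A B]; [simpl; lra|]. rewrite A, B. simpl. lra. }
  assert (P3 : ((t1+t2)/2 <= 1/2 /\ D ((t1+t2)/2) = (t1+t2)/2) \/ (1/2 <= (t1+t2)/2 /\ D ((t1+t2)/2) = Rabs ((t1+t2)/2 - 1))).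
  { destruct (Rle_dec ((t1+t2)/2) (1/2)).
    - left. split; auto. rewrite D_small; rewrite Rabs_right; lra.
    - right. split; [lra|]. rewrite (D_exact _ 1); simpl; auto.
      unfold Rabs; destruct Rcase_abs; lra. }
  rewrite P1.
  destruct P2 as [[Q2 P2]|[Q2 P2]]; rewrite P2; destruct P3 as [[Q3 P3]|[Q3 P3]]; rewrite P3;
  unfold hprim, Ev, Rsqr, Rmax, Rabs;
  repeat match goal with |- context [Rle_dec ?a ?b] => destruct (Rle_dec a b) end;
  repeat match goal with |- context [Rcase_abs ?a] => destruct (Rcase_abs a) end;
  try lra; nra.
Qed.

Lemma LOC t1 t2 : t1 <= t2 <= t1 + 1/2 ->
  (t2 - t1) * D ((t1+t2)/2) = Psi t2 - Psi t1 + Ev (t2-t1) (D ((t1+t2)/2)).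
Proof.
  intros H. set (k := Int_part t1). set (f := frac_part t1).
  pose proof (frac_decomp t1) as Hd. pose proof (frac_range t1) as Hr. fold k f in Hd, Hr.
  set (u2 := t2 - IZR k).
  assert (E1 : t1 = f + IZR k) by lra. assert (E2 : t2 = u2 + IZR k) by (unfold u2; lra).
  assert (E3 : (t1 + t2)/2 = (f + u2)/2 + IZR k) by lra.
  rewrite E3, D_per, E1, E2, !Psi_shift.
  replace (u2 + IZR k - (f + IZR k)) with (u2 - f) by ring.
  rewrite (LOC0 f u2); [ring| lra | unfold u2; lra].
Qed.
Lemma maxdist_ge x k y j : (j < k)%nat -> dist y (x j) <= maxdist x k y.
Proof.
  induction k; intros H; [lia|]. simpl.
  destruct (Nat.eq_dec j k). subst. apply Rmax_r.
  eapply Rle_trans; [apply IHk; lia| apply Rmax_l].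
Qed.

Lemma maxdist_nonneg x k y : 0 <= maxdist x k y.
Proof. induction k; simpl; [lra|]. eapply Rle_trans; [apply IHk|apply Rmax_l]. Qed.

Lemma maxdist_le x k y B : 0 <= B -> (forall j, (j < k)%nat -> dist y (x j) <= B) -> maxdist x k y <= B.
Proof.
  intros HB; induction k; intros H; simpl; [lra|].
  apply Rmax_lub; [apply IHk; intros; apply H; lia| apply H; lia].
Qed.

Lemma maxdist_attain x k y : (1 <= k)%nat -> exists j, (j < k)%nat /\ maxdist x k y = dist y (x j).
Proof.
  induction k; intros H; [lia|]. simpl.
  destruct (Nat.eq_dec k 0). subst. exists 0%nat. split; [lia|]. simpl.
  apply Rmax_right. apply dist_range.
  destruct IHk as [j [Hj E]]; [lia|].
  destruct (Rle_dec (maxdist x k y) (dist y (x k))).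
  - exists k. split; [lia|]. apply Rmax_right; auto.
  - exists j. split; [lia|]. rewrite Rmax_left by lra. auto.
Qed.

Lemma maxdist_ext x x' k y y' : (forall j, (j < k)%nat -> dist y (x j) = dist y' (x' j)) ->
  maxdist x k y = maxdist x' k y'.
Proof. induction k; intros H; simpl; auto. rewrite IHk by (intros; apply H; lia). rewrite H by lia. auto. Qed.

Lemma argmin_nat (f : nat -> R) n : (1 <= n)%nat -> exists k, (k < n)%nat /\ forall j, (j < n)%nat -> f k <= f j.
Proof.
  induction n; intros H; [lia|].
  destruct (Nat.eq_dec n 0). subst. exists 0%nat. split; [lia|]. intros j Hj. assert (j = 0%nat) by lia. subst. lra.
  destruct IHn as [k [Hk Hm]]; [lia|].
  destruct (Rle_dec (f k) (f n)).
  - exists k. split; [lia|]. intros j Hj. destruct (Nat.eq_dec j n); [subst; auto| apply Hm; lia].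
  - exists n. split; [lia|]. intros j Hj. destruct (Nat.eq_dec j n); [subst; lra|]. specialize (Hm j ltac:(lia)). lra.
Qed.

Lemma argmax_nat (f : nat -> R) n : (1 <= n)%nat -> exists k, (k < n)%nat /\ forall j, (j < n)%nat -> f j <= f k.
Proof.
  intros H. destruct (argmin_nat (fun j => - f j) n H) as [k [Hk Hm]].
  exists k. split; auto. intros j Hj. specialize (Hm j Hj). lra.
Qed.

Lemma expect_app P Q f : expect (P ++ Q) f = expect P f + expect Q f.
Proof. induction P as [|[p y] P IH]; simpl; [lra|]. rewrite IH. ring. Qed.

Lemma expect3 p1 a p2 b p3 c f : expect [(p1,a);(p2,b);(p3,c)] f = p1 * f a + p2 * f b + p3 * f c.
Proof. unfold expect; simpl. ring. Qed.

Definition sumA (A : list (R*R)) (F : R -> R -> R) : R :=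
  fold_right (fun ab acc => F (fst ab) (snd ab) + acc) 0 A.

Lemma sumA_app A B F : sumA (A ++ B) F = sumA A F + sumA B F.
Proof. induction A as [|[a b] A IH]; simpl; [lra|]. rewrite IH. ring. Qed.

Lemma sumA_le A F G : (forall a b, In (a,b) A -> F a b <= G a b) -> sumA A F <= sumA A G.
Proof.
  induction A as [|[a b] A IH]; intros H; simpl; [lra|].
  apply Rplus_le_compat; [apply H; left; auto| apply IH; intros; apply H; right; auto].
Qed.

Lemma sumA_ext A F G : (forall a b, In (a,b) A -> F a b = G a b) -> sumA A F = sumA A G.
Proof.
  induction A as [|[a b] A IH]; intros H; simpl; [lra|].
  rewrite H by (left; auto). rewrite IH; auto. intros; apply H; right; auto.
Qed.

Lemma sumA_plus A F G : sumA A (fun a b => F a b + G a b) = sumA A F + sumA A G.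
Proof. induction A as [|[a b] A IH]; simpl; [lra|]. rewrite IH. ring. Qed.

Lemma sumA_const A c F : sumA A (fun a b => c * F a b) = c * sumA A F.
Proof. induction A as [|[a b] A IH]; simpl; [lra|]. rewrite IH. ring. Qed.

Lemma sumA_nonpos_one A F a0 b0 : In (a0,b0) A -> (forall a b, In (a,b) A -> F a b <= 0) ->
  sumA A F <= F a0 b0.
Proof.
  induction A as [|[a b] A IH]; intros Hin H; simpl; [destruct Hin|].
  destruct Hin as [e|Hin].
  - inversion e; subst. assert (sumA A F <= 0).
    { replace 0 with (sumA A (fun _ _ => 0)). apply sumA_le. intros; apply H; right; auto.
      clear. induction A; simpl; lra. }
    simpl. lra.
  - pose proof (H a b (or_introl eq_refl)). specialize (IH Hin (fun a b h => H a b (or_intror h))). simpl. lra.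
Qed.
Fixpoint inner (s : list R) : list (R*R) :=
  match s with
  | a :: ((b :: _) as t) => (a,b) :: inner t
  | _ => []
  end.

Definition arcs (s : list R) : list (R*R) :=
  match s with [] => [] | a0 :: _ => inner s ++ [(last s a0, a0 + 1)] end.

Definition arcmap (A : list (R*R)) : dist_G := map (fun ab => (snd ab - fst ab, (fst ab + snd ab)/2)) A.

Lemma rc_inner_eq s : rc_inner s = arcmap (inner s).
Proof.
  induction s as [|a t IH]; simpl; auto.
  destruct t as [|b t']; simpl; auto. f_equal. exact IH.
Qed.

Lemma expect_arcmap A f : expect (arcmap A) f = sumA A (fun a b => (b - a) * f ((a+b)/2)).
Proof. induction A as [|[a b] A IH]; simpl; auto. unfold expect in *. simpl. rewrite IH. auto. Qed.

Lemma expect_rc s f : expect (rc_of_sorted s) f = sumA (arcs s) (fun a b => (b - a) * f ((a+b)/2)).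
Proof.
  destruct s as [|a0 t]; [reflexivity|]. unfold rc_of_sorted, arcs.
  rewrite expect_app, sumA_app, rc_inner_eq, expect_arcmap.
  f_equal. unfold expect, sumA; simpl. set (zz := match t with [] => a0 | _ :: _ => last t a0 end).
  replace (zz + (a0 + 1)) with (zz + a0 + 1) by ring. reflexivity.
Qed.

Lemma last_In (l : list R) d : l <> [] -> In (last l d) l.
Proof.
  induction l as [|x t IH]; intros H; [congruence|].
  destruct t as [|y t']; simpl; auto. right. apply IH. discriminate.
Qed.

Lemma SS_last (l : list R) d : StronglySorted Rle l -> forall u, In u l -> u <= last l d.
Proof.
  induction l as [|x t IH]; intros H u Hu; [destruct Hu|].
  inversion H; subst.
  destruct t as [|y t'].
  - destruct Hu as [e|[]]; subst; simpl; lra.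
  - change (last (x :: y :: t') d) with (last (y :: t') d).
    destruct Hu as [e|Hu].
    + subst. rewrite Forall_forall in H3. apply H3. apply last_In. discriminate.
    + apply IH; auto.
Qed.

Lemma SS_head (x : R) t : StronglySorted Rle (x :: t) -> forall u, In u (x :: t) -> x <= u.
Proof.
  intros H u Hu. inversion H; subst. destruct Hu as [e|Hu]; [subst; lra|].
  rewrite Forall_forall in H3. apply H3; auto.
Qed.

Lemma inner_props s : StronglySorted Rle s -> forall a b, In (a,b) (inner s) ->
  In a s /\ In b s /\ a <= b /\ (forall u, In u s -> u <= a \/ b <= u).
Proof.
  induction s as [|x t IH]; intros H a b Hin; [destruct Hin|].
  destruct t as [|y t']; [destruct Hin|].
  inversion H; subst. simpl in Hin. destruct Hin as [e|Hin].
  - inversion e; subst. rewrite Forall_forall in H3.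
    split; [left; auto|]. split; [right; left; auto|]. split; [apply H3; left; auto|].
    intros u [Hu|Hu]; [left; subst; lra|]. right. eapply SS_head; eauto.
  - destruct (IH H2 a b Hin) as [A [B [C Dd]]].
    split; [right; auto|]. split; [right; auto|]. split; auto.
    intros u [Hu|Hu]; [|apply Dd; auto]. subst. left.
    rewrite Forall_forall in H3. apply H3; auto.
Qed.

Lemma inner_tele (Phi : R -> R) s d : s <> [] ->
  sumA (inner s) (fun a b => Phi b - Phi a) = Phi (last s d) - Phi (hd d s).
Proof.
  induction s as [|x t IH]; intros H; [congruence|].
  destruct t as [|y t']; simpl; [ring|].
  simpl in IH. rewrite IH by discriminate. destruct t'; simpl; ring.
Qed.

Lemma arcs_tele (Phi : R -> R) c a0 t :
  (forall u, Phi (u + 1) = Phi u + c) ->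
  sumA (arcs (a0 :: t)) (fun a b => Phi b - Phi a) = c.
Proof.
  intros Hp. unfold arcs. rewrite sumA_app, (inner_tele Phi _ a0) by discriminate.
  simpl. rewrite Hp. ring.
Qed.

Section ArcsProps.
Variable a0 : R.
Variable t : list R.
Hypothesis Hs : StronglySorted Rle (a0 :: t).
Hypothesis Hr : forall u, In u (a0 :: t) -> 0 <= u < 1.

Let s := a0 :: t.
Let z := last s a0.

Lemma z_props : In z s /\ a0 <= z /\ (forall u, In u s -> a0 <= u <= z).
Proof.
  split. apply last_In; discriminate. split. apply SS_last; auto; left; auto.
  intros u Hu. split. apply SS_head with t; auto. apply SS_last; auto.
Qed.

Lemma arcs_in a b : In (a,b) (arcs s) ->
  (In (a,b) (inner s) /\ b < 1) \/ (a = z /\ b = a0 + 1).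
Proof.
  unfold arcs, s. intros H. apply in_app_or in H. destruct H as [H|[H|[]]].
  - left. split; auto. destruct (inner_props _ Hs a b H) as [_ [B _]]. apply Hr in B. lra.
  - right. inversion H. auto.
Qed.

Lemma arcs_A1 a b : In (a,b) (arcs s) -> 0 <= a < 1 /\ a <= b <= a + 1.
Proof.
  intros H. destruct z_props as [Z1 [Z2 Z3]].
  destruct (arcs_in a b H) as [[H1 H2]|[H1 H2]].
  - destruct (inner_props _ Hs a b H1) as [A [B [C _]]]. apply Hr in A. apply Hr in B. lra.
  - subst. apply Hr in Z1. pose proof (Hr a0 (or_introl eq_refl)). lra.
Qed.

Lemma arcs_A2 a b : In (a,b) (arcs s) -> In a s /\ (In b s \/ In (b - 1) s).
Proof.
  intros H. destruct z_props as [Z1 [Z2 Z3]].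
  destruct (arcs_in a b H) as [[H1 H2]|[H1 H2]].
  - destruct (inner_props _ Hs a b H1) as [A [B _]]. auto.
  - subst. split; auto. right. replace (a0 + 1 - 1) with a0 by ring. left; auto.
Qed.

Lemma arcs_N a b u : In (a,b) (arcs s) -> In u s -> ~ (a < u < b) /\ ~ (a < u + 1 < b).
Proof.
  intros H Hu. destruct z_props as [Z1 [Z2 Z3]]. pose proof (Hr u Hu).
  destruct (arcs_in a b H) as [[H1 H2]|[H1 H2]].
  - destruct (inner_props _ Hs a b H1) as [A [B [C Dd]]]. destruct (Dd u Hu); split; lra.
  - subst. pose proof (Z3 u Hu). split; lra.
Qed.

Lemma inner_cover l w d : StronglySorted Rle l -> l <> [] -> hd d l <= w <= last l d ->
  (exists a b, In (a,b) (inner l) /\ a <= w <= b) \/ (forall u, In u l -> u = w).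
Proof.
  induction l as [|x l' IH]; intros H Hn Hw; [congruence|].
  destruct l' as [|y t']; simpl in Hw.
  - right. intros u [e|[]]; subst; lra.
  - inversion H; subst. rewrite Forall_forall in H3.
    assert (x <= y) by (apply H3; left; auto).
    destruct (Rle_dec w y).
    + left. exists x, y. split; [left; auto| lra].
    + destruct (IH H2 ltac:(discriminate)) as [[a [b [Hab Hw']]]|Hall].
      * simpl. split; [lra|]. destruct t'; simpl in *; lra.
      * left. exists a, b. split; [right; auto| auto].
      * exfalso. specialize (Hall y (or_introl eq_refl)). lra.
Qed.

Lemma arcs_C w : 0 <= w < 1 -> exists a b, In (a,b) (arcs s) /\ ((a <= w <= b) \/ (a <= w + 1 <= b)).
Proof.
  intros Hw. destruct z_props as [Z1 [Z2 Z3]]. pose proof (Hr z Z1). pose proof (Hr a0 (or_introl eq_refl)).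
  assert (Hwr : In (z, a0 + 1) (arcs s)) by (unfold arcs, s; apply in_or_app; right; left; auto).
  destruct (Rlt_dec w a0).
  - exists z, (a0+1). split; auto. right. lra.
  - destruct (Rle_dec z w).
    + exists z, (a0+1). split; auto. left. lra.
    + destruct (inner_cover s w a0 Hs ltac:(discriminate)) as [[a [b [Hab Hw']]]|Hall].
      * change (hd a0 s) with a0. fold z. lra.
      * exists a, b. split; [unfold arcs, s; apply in_or_app; left; auto| left; auto].
      * exfalso. specialize (Hall z Z1). lra.
Qed.

Lemma inner_U l w F M : 0 <= M -> StronglySorted Rle l ->
  (forall a b, In (a,b) (inner l) -> 0 <= F a b <= M) ->
  (forall a b, In (a,b) (inner l) -> ~ (a < w < b) -> F a b = 0) ->
  sumA (inner l) F <= M /\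
  ((forall u, In u l -> w <= u) \/ (forall u, In u l -> u <= w) -> sumA (inner l) F = 0).
Proof.
  intros HM. induction l as [|x l' IH]; intros H HF HZ.
  - simpl. split; auto.
  - destruct l' as [|y t']. simpl. split; auto.
    inversion H; subst. rewrite Forall_forall in H3.
    assert (Hxy : x <= y) by (apply H3; left; auto).
    assert (HF' : forall a b, In (a,b) (inner (y :: t')) -> 0 <= F a b <= M)
      by (intros; apply HF; right; auto).
    assert (HZ' : forall a b, In (a,b) (inner (y :: t')) -> ~ (a < w < b) -> F a b = 0)
      by (intros; apply HZ; [right|]; auto).
    destruct (IH H2 HF' HZ') as [I1 I2].
    change (sumA (inner (x :: y :: t')) F) with (F x y + sumA (inner (y :: t')) F).
    assert (Fxy := HF x y (or_introl eq_refl)).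
    split.
    + destruct (Rlt_dec x w); [destruct (Rlt_dec w y)|].
      * rewrite I2. lra. left. intros u Hu. pose proof (SS_head y t' H2 u Hu). lra.
      * rewrite (HZ x y (or_introl eq_refl)) by lra. lra.
      * rewrite (HZ x y (or_introl eq_refl)) by lra. lra.
    + intros [Hall|Hall].
      * pose proof (Hall x (or_introl eq_refl)).
        rewrite (HZ x y (or_introl eq_refl)) by lra. rewrite I2. lra. left. intros; apply Hall; right; auto.
      * pose proof (Hall y (or_intror (or_introl eq_refl))).
        rewrite (HZ x y (or_introl eq_refl)) by lra. rewrite I2. lra. right. intros; apply Hall; right; auto.
Qed.

Lemma arcs_U w F M : 0 <= w < 1 -> 0 <= M ->
  (forall a b, In (a,b) (arcs s) -> 0 <= F a b <= M) ->
  (forall a b, In (a,b) (arcs s) -> ~ (a < w < b) -> ~ (a < w + 1 < b) -> F a b = 0) ->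
  sumA (arcs s) F <= M.
Proof.
  intros Hw HM HF HZ. destruct z_props as [Z1 [Z2 Z3]].
  assert (Hwr : In (z, a0 + 1) (arcs s)) by (unfold arcs, s; apply in_or_app; right; left; auto).
  assert (Hin : forall a b, In (a,b) (inner s) -> In (a,b) (arcs s)) by (intros; unfold arcs, s; apply in_or_app; left; auto).
  destruct (inner_U s w F M HM Hs) as [I1 I2].
  - intros; apply HF; auto.
  - intros a b Hab Hn. apply HZ; auto. destruct (inner_props _ Hs a b Hab) as [_ [B _]]. apply Hr in B. lra.
  - replace (arcs s) with (inner s ++ [(z, a0+1)]) by reflexivity. rewrite sumA_app.
    replace (sumA [(z, a0+1)] F) with (F z (a0+1)) by (unfold sumA; simpl; ring).
    pose proof (HF z (a0+1) Hwr).
    destruct (Rlt_dec z w); [|destruct (Rlt_dec w a0)].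
    + rewrite I2. lra. right. intros u Hu. pose proof (Z3 u Hu). lra.
    + rewrite I2. lra. left. intros u Hu. pose proof (Z3 u Hu). lra.
    + rewrite (HZ z (a0+1) Hwr) by lra. lra.
Qed.
End ArcsProps.
Lemma arc_far a b w : 0 <= a < 1 -> a <= b <= a + 1/2 -> 0 <= w < 1 ->
  ~ (a < w < b) -> ~ (a < w + 1 < b) -> (b - a)/2 <= dist w ((a+b)/2).
Proof.
  intros Ha Hb Hw N1 N2. rewrite dist_D. apply D_ge. intros k.
  destruct (Z.lt_trichotomy k (-1)) as [h|[h|h]].
  - assert (IZR k <= -2) by (change (-2) with (IZR (-2)); apply IZR_le; lia).
    rewrite Rabs_right; lra.
  - subst. simpl. unfold Rabs; destruct Rcase_abs; lra.
  - destruct (Z.eq_dec k 0).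
    + subst. simpl. unfold Rabs; destruct Rcase_abs; lra.
    + assert (IZR k >= 1) by (change 1 with (IZR 1); apply IZR_ge; lia).
      rewrite Rabs_left; lra.
Qed.

Lemma arc_in a b v : a <= v <= b -> b <= a + 1/2 ->
  dist v a = v - a /\ dist v b = b - v /\ dist v ((a+b)/2) = Rabs (v - (a+b)/2).
Proof.
  intros H1 H2. rewrite !dist_D. split; [|split].
  - rewrite D_small; rewrite Rabs_right; lra.
  - rewrite D_small; rewrite Rabs_left1; lra.
  - rewrite D_small; auto. unfold Rabs; destruct Rcase_abs; lra.
Qed.

Lemma dist_plus1 v y : dist (v + 1) y = dist v y.
Proof. rewrite dist_sym, (dist_sym v). apply (dist_shift y v 1). Qed.

Lemma arc_LOC a b z : a <= b <= a + 1/2 ->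
  (b - a) * dist z ((a+b)/2) = Psi (b - z) - Psi (a - z) + Ev (b - a) (dist z ((a+b)/2)).
Proof.
  intros H. rewrite dist_D.
  replace (z - (a+b)/2) with (- (((a - z) + (b - z))/2)) by field. rewrite D_sym.
  replace (b - a) with ((b - z) - (a - z)) by ring. apply LOC. lra.
Qed.

Lemma rc_formula a0 t z : StronglySorted Rle (a0 :: t) ->
  (forall a b, In (a,b) (arcs (a0 :: t)) -> a <= b <= a + 1/2) ->
  cost (rc_of_sorted (a0 :: t)) z = 1/4 + sumA (arcs (a0 :: t)) (fun a b => Ev (b - a) (dist z ((a+b)/2))).
Proof.
  intros Hs Hg. unfold cost. rewrite expect_rc.
  rewrite (sumA_ext _ _ (fun a b => (Psi (b - z) - Psi (a - z)) + Ev (b - a) (dist z ((a+b)/2)))).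
  2: { intros a b Hab. apply arc_LOC; auto. }
  rewrite sumA_plus. f_equal.
  apply (arcs_tele (fun u => Psi (u - z))). intros u.
  replace (u + 1 - z) with ((u - z) + IZR 1) by (simpl; ring). rewrite Psi_shift. simpl. lra.
Qed.

Lemma Ev_bounds g d : Ev g d <= Rsqr (Rmax 0 (d - (1-g)/2)) /\ - Rsqr (Rmax 0 (g/2 - d)) <= Ev g d.
Proof. unfold Ev. pose proof (Rle_0_sqr (Rmax 0 (g/2 - d))). pose proof (Rle_0_sqr (Rmax 0 (d - (1-g)/2))). lra. Qed.
Lemma sumA_ge_one A F a0 b0 : In (a0,b0) A -> (forall a b, In (a,b) A -> 0 <= F a b) ->
  F a0 b0 <= sumA A F.
Proof.
  intros Hin H. pose proof (sumA_nonpos_one A (fun a b => -1 * F a b) a0 b0 Hin).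
  rewrite sumA_const in H0. assert (-1 * sumA A F <= -1 * F a0 b0).
  apply H0. intros a b h. specialize (H a b h). lra. lra.
Qed.

Lemma antip_range u : 0 <= antip u < 1.
Proof. apply frac_range. Qed.

Lemma sqr_mono r M : 0 <= r <= M -> Rsqr r <= Rsqr M.
Proof. intros H. unfold Rsqr. nra. Qed.

Section RC.
Variable n : nat.
Variable x : nat -> R.
Variable a0 : R.
Variable t : list R.
Hypothesis Hval : valid_profile n x.
Hypothesis Hperm : Permutation (a0 :: t) (map (fun j => antip (x j)) (seq 0 n)).
Hypothesis Hsort : Sorted Rle (a0 :: t).

Let s := a0 :: t.

Lemma RC_SS : StronglySorted Rle s.
Proof. apply Sorted_StronglySorted; auto. intros a b c; apply Rle_trans. Qed.

Lemma RC_mem u : In u s <-> exists j, (j < n)%nat /\ u = antip (x j).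
Proof.
  split.
  - intros H. apply (Permutation_in _ Hperm) in H. apply in_map_iff in H.
    destruct H as [j [e Hj]]. apply in_seq in Hj. exists j. split; [lia| auto].
  - intros [j [Hj e]]. apply (Permutation_in _ (Permutation_sym Hperm)). apply in_map_iff.
    exists j. split; auto. apply in_seq. lia.
Qed.

Lemma RC_range u : In u s -> 0 <= u < 1.
Proof. intros H. apply RC_mem in H. destruct H as [j [_ e]]. subst. apply antip_range. Qed.

Lemma RC_antip_in j : (j < n)%nat -> In (antip (x j)) s.
Proof. intros H. apply RC_mem. eauto. Qed.

Lemma RC_gap : ~ on_one_semicircle n x -> forall a b, In (a,b) (arcs s) -> a <= b <= a + 1/2.
Proof.
  intros Hns a b Hab.
  destruct (arcs_A1 a0 t RC_SS RC_range a b Hab) as [A1 A2].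
  split; [lra|]. destruct (Rle_dec b (a + 1/2)) as [|Hgt]; auto. exfalso. apply Hns.
  exists (b + 1/2). intros j Hj. unfold in_arc, ccw.
  set (u := antip (x j)).
  assert (Hu : In u s) by (apply RC_antip_in; auto).
  destruct (arcs_N a0 t RC_SS RC_range a b u Hab Hu) as [N1 N2].
  pose proof (RC_range u Hu) as Hur.
  assert (E : frac_part (x j - (b + 1/2)) = frac_part (u - b)).
  { unfold u, antip. pose proof (frac_decomp (x j + /2)).
    replace (x j - (b + 1/2)) with ((frac_part (x j + /2) - b) + IZR (Int_part (x j + /2) - 1)).
    apply frac_shift. rewrite minus_IZR. simpl. lra. }
  rewrite E. destruct (Rle_dec b u).
  - rewrite frac_id; lra.
  - rewrite frac_idm1; lra.
Qed.

Section WithGap.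
Hypothesis Hgap : forall a b, In (a,b) (arcs s) -> a <= b <= a + 1/2.

Lemma RC_far_elem u a b : In u s -> In (a,b) (arcs s) -> (b - a)/2 <= dist u ((a+b)/2).
Proof.
  intros Hu Hab. destruct (arcs_A1 a0 t RC_SS RC_range a b Hab) as [A1 A2].
  destruct (arcs_N a0 t RC_SS RC_range a b u Hab Hu) as [N1 N2].
  apply arc_far; auto. apply RC_range; auto.
Qed.

Lemma RC_truth i : (i < n)%nat ->
  cost (rc_of_sorted s) (x i) <= 1/4 - Rsqr (1/2 - maxdist x n (x i)).
Proof.
  intros Hi. set (z := x i). set (F := maxdist x n z).
  pose proof (Hval i Hi) as Hz. fold z in Hz.
  assert (HF : F <= 1/2) by (apply maxdist_le; [lra| intros; apply dist_range]).
  unfold s. rewrite rc_formula; [| apply RC_SS| exact Hgap]. fold s.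
  assert (Hle : forall a b, In (a,b) (arcs s) -> Ev (b - a) (dist z ((a+b)/2)) <= - Rsqr (Rmax 0 ((b-a)/2 - dist z ((a+b)/2)))).
  { intros a b Hab. unfold Ev.
    assert (Hp : Rmax 0 (dist z ((a + b) / 2) - (1 - (b - a)) / 2) = 0).
    { apply Rmax_left.
      pose proof (RC_far_elem (antip z) a b (RC_antip_in i Hi) Hab).
      rewrite (dist_sym z), <- (Rminus_0_r (dist _ z)).
      pose proof (dist_antip ((a+b)/2) z). rewrite dist_sym in H0. lra. }
    rewrite Hp. unfold Rsqr at 1. lra. }
  destruct (arcs_C a0 t RC_SS RC_range z Hz) as [a [b [Hab Hv]]]. fold s in Hab.
  destruct (Hgap a b Hab) as [G1 G2].
  assert (Hv' : exists v, a <= v <= b /\ forall y, dist v y = dist z y).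
  { destruct Hv as [Hv|Hv]; [exists z; split; auto| exists (z+1); split; auto; intros; apply dist_plus1]. }
  destruct Hv' as [v [Hv1 Hv2]].
  destruct (arc_in a b v Hv1 G2) as [I1 [I2 I3]]. rewrite Hv2 in I1, I2, I3.
  destruct (arcs_A2 a0 t RC_SS RC_range a b Hab) as [Ha Hb].
  assert (Da : 1/2 - F <= dist z a).
  { apply RC_mem in Ha. destruct Ha as [j [Hj e]]. rewrite e, dist_antip.
    pose proof (maxdist_ge x n z j Hj). fold F in H. lra. }
  assert (Db : 1/2 - F <= dist z b).
  { assert (exists b', In b' s /\ dist z b = dist z b') as [b' [Hb' e']].
    { destruct Hb as [Hb|Hb]; [exists b; auto|exists (b - 1); split; auto].
      replace b with ((b - 1) + IZR 1) at 1 by (simpl; ring). apply dist_shift. }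
    rewrite e'. apply RC_mem in Hb'. destruct Hb' as [j [Hj e]]. rewrite e, dist_antip.
    pose proof (maxdist_ge x n z j Hj). fold F in H. lra. }
  assert (Hone := sumA_nonpos_one (arcs s) (fun a b => Ev (b - a) (dist z ((a+b)/2))) a b Hab).
  assert (Hmin : 1/2 - F <= (b - a)/2 - dist z ((a+b)/2)).
  { rewrite I3. unfold Rabs; destruct Rcase_abs; lra. }
  assert (Hf0 : 0 <= 1/2 - F) by lra.
  assert (Hsq : Rsqr (1/2 - F) <= Rsqr (Rmax 0 ((b-a)/2 - dist z ((a+b)/2)))).
  { apply sqr_mono. split; auto. eapply Rle_trans; [exact Hmin| apply Rmax_r]. }
  cut (sumA (arcs s) (fun a b => Ev (b - a) (dist z ((a+b)/2))) <= Ev (b-a) (dist z ((a+b)/2))).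
  { intros. pose proof (Hle a b Hab). lra. }
  apply Hone. intros a' b' Hab'. pose proof (Hle a' b' Hab'). pose proof (Rle_0_sqr (Rmax 0 ((b' - a') / 2 - dist z ((a' + b') / 2)))). lra.
Qed.
Lemma RC_lb z j : 0 <= z < 1 -> (j < n)%nat ->
  1/4 - Rsqr (1/2 - dist z (x j)) <= cost (rc_of_sorted s) z.
Proof.
  intros Hz Hj. set (M := 1/2 - dist z (x j)).
  assert (HM : 0 <= M) by (unfold M; pose proof (dist_range z (x j)); lra).
  unfold s. rewrite rc_formula; [| apply RC_SS| exact Hgap]. fold s.
  set (V := fun a b => Rsqr (Rmax 0 ((b - a)/2 - dist z ((a+b)/2)))).
  assert (H1 : sumA (arcs s) (fun a b => -1 * V a b) <= sumA (arcs s) (fun a b => Ev (b - a) (dist z ((a+b)/2)))).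
  { apply sumA_le. intros a b _. destruct (Ev_bounds (b - a) (dist z ((a+b)/2))) as [_ H]. unfold V. lra. }
  rewrite sumA_const in H1.
  assert (H2 : sumA (arcs s) V <= Rsqr M).
  { apply (arcs_U a0 t RC_SS RC_range z); auto.
    - apply Rle_0_sqr.
    - intros a b Hab. unfold V. split; [apply Rle_0_sqr|]. apply sqr_mono. split; [apply Rmax_l|].
      apply Rmax_lub; auto.
      pose proof (RC_far_elem (antip (x j)) a b (RC_antip_in j Hj) Hab).
      pose proof (dist_tri (antip (x j)) z ((a+b)/2)).
      rewrite (dist_sym (antip (x j)) z), dist_antip in H0. unfold M. lra.
    - intros a b Hab N1 N2. unfold V. destruct (arcs_A1 a0 t RC_SS RC_range a b Hab).
      pose proof (arc_far a b z H (Hgap a b Hab) Hz N1 N2).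
      rewrite Rmax_left by lra. unfold Rsqr; ring. }
  lra.
Qed.

Lemma RC_mc y : mc n (rc_of_sorted s) x <= 3/2 * mc_pt n x y.
Proof.
  unfold mc, mc_pt. rewrite expect_rc.
  set (w := frac_part y). pose proof (frac_range y) as Hw. fold w in Hw.
  destruct (arcs_C a0 t RC_SS RC_range w Hw) as [a [b [Hab Hv]]]. fold s in Hab.
  destruct (Hgap a b Hab) as [G1 G2].
  assert (Hub : sumA (arcs s) (fun a b => (b - a) * maxdist x n ((a+b)/2)) <=
                sumA (arcs s) (fun a b => (b - a) * (1/2 - (b - a)/2))).
  { apply sumA_le. intros a' b' Hab'. destruct (Hgap a' b' Hab'). apply Rmult_le_compat_l; [lra|].
    apply maxdist_le; [lra|]. intros j Hj.
    pose proof (RC_far_elem (antip (x j)) a' b' (RC_antip_in j Hj) Hab').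
    pose proof (dist_antip ((a'+b')/2) (x j)). rewrite dist_sym in H2. lra. }
  assert (Hsum1 : sumA (arcs s) (fun a b => b - a) = 1).
  { apply (arcs_tele (fun u => u)). intros; ring. }
  assert (Hsq : Rsqr (b - a) <= sumA (arcs s) (fun a b => Rsqr (b - a))).
  { apply (sumA_ge_one _ (fun a b => Rsqr (b - a))); auto. intros; apply Rle_0_sqr. }
  assert (Hre : sumA (arcs s) (fun a b => (b - a) * (1/2 - (b - a)/2)) =
                1/2 * sumA (arcs s) (fun a b => b - a) + (-1/2) * sumA (arcs s) (fun a b => Rsqr (b - a))).
  { rewrite (sumA_ext _ _ (fun a b => 1/2 * (b-a) + (-1/2) * Rsqr (b-a))).
    rewrite sumA_plus, !sumA_const; reflexivity. intros; unfold Rsqr; field. }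
  assert (Hlow : 1/2 - (b - a)/2 <= maxdist x n y).
  { rewrite (maxdist_ext x x n y w) by (intros; unfold w; rewrite dist_frac_l; auto).
    assert (Hv' : exists v, a <= v <= b /\ forall q, dist v q = dist w q).
    { destruct Hv as [Hv|Hv]; [exists w; split; auto| exists (w+1); split; auto; intros; apply dist_plus1]. }
    destruct Hv' as [v [Hv1 Hv2]].
    destruct (arc_in a b v Hv1 G2) as [I1 [I2 _]]. rewrite Hv2 in I1, I2.
    destruct (arcs_A2 a0 t RC_SS RC_range a b Hab) as [Ha Hb].
    destruct (Rle_dec (v - a) (b - v)).
    - apply RC_mem in Ha. destruct Ha as [j [Hj e]]. rewrite e, dist_antip in I1.
      pose proof (maxdist_ge x n w j Hj). lra.
    - assert (exists b', In b' s /\ dist w b = dist w b') as [b' [Hb' e']].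
      { destruct Hb as [Hb|Hb]; [exists b; auto|exists (b - 1); split; auto].
        replace b with ((b - 1) + IZR 1) at 1 by (simpl; ring). apply dist_shift. }
      apply RC_mem in Hb'. destruct Hb' as [j [Hj e]]. rewrite e', e, dist_antip in I2.
      pose proof (maxdist_ge x n w j Hj). lra. }
  assert (Hg : 0 <= b - a <= 1/2) by lra.
  unfold Rsqr in *. nra.
Qed.
End WithGap.
End RC.
Lemma ccw_self l : ccw l l = 0.
Proof. unfold ccw. replace (l - l) with 0 by ring. apply fp_R0. Qed.

Lemma ccw_rel l c u : ccw c u = frac_part (ccw l u - ccw l c).
Proof.
  unfold ccw. pose proof (frac_decomp (u - l)). pose proof (frac_decomp (c - l)).
  replace (u - c) with ((frac_part (u - l) - frac_part (c - l)) + IZR (Int_part (u - l) - Int_part (c - l))).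
  apply frac_shift. rewrite minus_IZR. lra.
Qed.

Section LRM.
Variable n : nat.
Variable y : nat -> R.
Variables l r : R.
Hypothesis Hma : minimal_arc n y l r.
Hypothesis HL : ccw l r <= 1/2.

Let L := ccw l r.
Let c := l + ccw l r / 2.
Let P := [(/4, l); (/4, r); (/2, c)].

Lemma L_nonneg : 0 <= L.
Proof. apply ccw_range. Qed.

Lemma L_le : L <= 1/2.
Proof. exact HL. Qed.

Lemma agents_in j : (j < n)%nat -> 0 <= ccw l (y j) <= L.
Proof. intros H. destruct Hma as [_ [_ [A _]]]. split; [apply ccw_range| apply A; auto]. Qed.

Lemma dist_l u : dist u l = D (ccw l u).
Proof. rewrite (dist_ccw l), ccw_self. rewrite Rminus_0_r. auto. Qed.

Lemma dist_r u : dist u r = D (ccw l u - L).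
Proof. rewrite (dist_ccw l). auto. Qed.

Lemma dist_c u : dist u c = D (ccw l u - L/2).
Proof. rewrite dist_sym. unfold c. rewrite dist_add. replace (ccw l r / 2 - ccw l u) with (- (ccw l u - L/2)) by (unfold L; field). apply D_sym. Qed.

Lemma LRM_cost z : cost P z = /4 * dist z l + /4 * dist z r + /2 * dist z c.
Proof. unfold cost, P. apply expect3. Qed.

Lemma dist_lr : dist l r = L.
Proof. rewrite dist_sym, dist_l. pose proof (ccw_range l r). unfold L. rewrite D_small; rewrite Rabs_right; lra. Qed.

Lemma LRM_lb z j : (j < n)%nat -> dist z (y j) <= 2 * cost P z.
Proof.
  intros Hj. rewrite LRM_cost. pose proof (agents_in j Hj) as Ha.
  pose proof (dist_tri z c (y j)).
  assert (dist c (y j) <= L/2).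
  { rewrite dist_sym, dist_c. eapply Rle_trans; [apply D_le_abs|]. unfold Rabs; destruct Rcase_abs; lra. }
  pose proof (dist_tri l z r). rewrite dist_lr, (dist_sym l z) in H1. lra.
Qed.

Lemma in_arc_dists u : ccw l u <= L ->
  dist u l = ccw l u /\ dist u r = L - ccw l u /\ dist u c = Rabs (ccw l u - L/2).
Proof.
  intros H. pose proof (ccw_range l u). pose proof L_nonneg. pose proof L_le.
  rewrite dist_l, dist_r, dist_c. split; [|split].
  - rewrite D_small; rewrite Rabs_right; lra.
  - rewrite D_small; rewrite Rabs_left1; lra.
  - apply D_small. unfold Rabs; destruct Rcase_abs; lra.
Qed.

Lemma LRM_truth i : (i < n)%nat -> exists j, (j < n)%nat /\ cost P (y i) = dist (y i) (y j) / 2.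
Proof.
  intros Hi. destruct Hma as [[jl [Hjl El]] [[jr [Hjr Er]] _]].
  destruct (agents_in i Hi) as [A1 A2].
  destruct (in_arc_dists (y i) A2) as [D1 [D2 D3]].
  rewrite LRM_cost, D1, D2, D3.
  destruct (Rle_dec (L/2) (ccw l (y i))).
  - exists jl. split; auto. rewrite El, D1. rewrite Rabs_right by lra. lra.
  - exists jr. split; auto. rewrite Er, D2. rewrite Rabs_left by lra. lra.
Qed.

Lemma LRM_mc q : mc n P y <= 3/2 * mc_pt n y q.
Proof.
  destruct Hma as [[jl [Hjl El]] [[jr [Hjr Er]] _]].
  unfold mc, mc_pt, P. rewrite expect3. pose proof L_nonneg. pose proof L_le.
  assert (M1 : maxdist y n l <= L).
  { apply maxdist_le; auto. intros j Hj. destruct (agents_in j Hj) as [Ha1 Ha2].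
    destruct (in_arc_dists (y j) Ha2) as [D1 _]. rewrite dist_sym, D1. lra. }
  assert (M2 : maxdist y n r <= L).
  { apply maxdist_le; auto. intros j Hj. destruct (agents_in j Hj) as [Ha1 Ha2].
    destruct (in_arc_dists (y j) Ha2) as [_ [D2 _]]. rewrite dist_sym, D2. lra. }
  assert (M3 : maxdist y n c <= L/2).
  { apply maxdist_le; [lra|]. intros j Hj. destruct (agents_in j Hj) as [Ha1 Ha2].
    destruct (in_arc_dists (y j) Ha2) as [_ [_ D3]]. rewrite dist_sym, D3.
    unfold Rabs; destruct Rcase_abs; lra. }
  assert (Lq : L/2 <= maxdist y n q).
  { pose proof (maxdist_ge y n q jl Hjl) as Q1. pose proof (maxdist_ge y n q jr Hjr) as Q2.
    rewrite El in Q1. rewrite Er in Q2. pose proof (dist_tri l q r) as Q3. rewrite dist_lr, (dist_sym l q) in Q3. lra. }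
  lra.
Qed.

Lemma LRM_far z : ccw l (antip z) <= L -> 1/4 <= cost P z.
Proof.
  intros H. rewrite LRM_cost.
  destruct (in_arc_dists (antip z) H) as [D1 [D2 D3]].
  assert (forall u, dist z u = 1/2 - dist (antip z) u).
  { intros u. rewrite (dist_sym (antip z)), dist_antip, dist_sym. ring. }
  rewrite !H0, D1, D2, D3. pose proof (ccw_range l (antip z)). pose proof L_le.
  unfold Rabs; destruct Rcase_abs; lra.
Qed.
End LRM.

Lemma semicircle_switch n x i v l L : valid_profile n x -> (i < n)%nat -> L <= 1/2 ->
  all_in_arc n (deviate x i v) l L -> L < ccw l (antip (x i)) -> on_one_semicircle n x.
Proof.
  intros Hval Hi HL Hall Hgt.
  set (p := ccw l (x i)). pose proof (ccw_range l (x i)) as Hp. fold p in Hp.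
  assert (Ht : ccw l (antip (x i)) = frac_part (p + 1/2)).
  { unfold ccw, antip, p. pose proof (frac_decomp (x i + /2)). pose proof (frac_decomp (x i - l)).
    replace (frac_part (x i + /2) - l) with ((frac_part (x i - l) + 1/2) + IZR (Int_part (x i - l) - Int_part (x i + /2))).
    apply frac_shift. rewrite minus_IZR. lra. }
  assert (Hoth : forall j, (j < n)%nat -> j <> i -> ccw l (x j) <= L).
  { intros j Hj Hne. specialize (Hall j Hj). unfold in_arc, deviate in Hall.
    apply Nat.eqb_neq in Hne. rewrite Hne in Hall. auto. }
  destruct (Rlt_dec p (1/2)).
  - exists l. intros j Hj. unfold in_arc. destruct (Nat.eq_dec j i).
    + subst. fold p. lra.
    + pose proof (Hoth j Hj n0). lra.
  - rewrite Ht, frac_id1 in Hgt by lra.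
    exists (x i). intros j Hj. unfold in_arc. destruct (Nat.eq_dec j i).
    + subst. rewrite ccw_self. lra.
    + pose proof (Hoth j Hj n1). rewrite (ccw_rel l). fold p.
      pose proof (ccw_range l (x j)). rewrite frac_idm1; lra.
Qed.
Fixpoint ins (a : R) (s : list R) : list R :=
  match s with
  | [] => [a]
  | b :: t => if Rle_dec a b then a :: b :: t else b :: ins a t
  end.

Lemma ins_perm a s : Permutation (ins a s) (a :: s).
Proof.
  induction s as [|b t IH]; simpl; auto.
  destruct (Rle_dec a b); auto.
  eapply perm_trans; [apply perm_skip; exact IH| apply perm_swap].
Qed.

Lemma ins_sorted a s : Sorted Rle s -> Sorted Rle (ins a s).
Proof.
  induction s as [|b t IH]; intros H; simpl.
  - constructor; auto.
  - destruct (Rle_dec a b).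
    + constructor; auto.
    + inversion H; subst. constructor; [apply IH; auto|].
      destruct t as [|c t']; simpl; [constructor; lra|].
      destruct (Rle_dec a c); constructor; [lra| inversion H3; auto].
Qed.

Lemma sort_exists (l : list R) : exists s, Permutation s l /\ Sorted Rle s.
Proof.
  induction l as [|a l IH].
  - exists []. split; auto.
  - destruct IH as [s [Hp Hs]]. exists (ins a s). split.
    + eapply perm_trans; [apply ins_perm| apply perm_skip; auto].
    + apply ins_sorted; auto.
Qed.

Fixpoint maxf (g : nat -> R) (m : nat) : R :=
  match m with O => 0 | S m' => Rmax (maxf g m') (g m') end.

Lemma maxf_ge g m j : (j < m)%nat -> g j <= maxf g m.
Proof.
  induction m; intros H; [lia|]. simpl.
  destruct (Nat.eq_dec j m). subst. apply Rmax_r.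
  eapply Rle_trans; [apply IHm; lia| apply Rmax_l].
Qed.

Lemma maxf_le g m B : 0 <= B -> (forall j, (j < m)%nat -> g j <= B) -> maxf g m <= B.
Proof.
  intros HB; induction m; intros H; simpl; [lra|].
  apply Rmax_lub; [apply IHm; intros; apply H; lia| apply H; lia].
Qed.

Lemma maxf_attain g m : (1 <= m)%nat -> (forall j, 0 <= g j) -> exists j, (j < m)%nat /\ maxf g m = g j.
Proof.
  intros Hm Hg. induction m; [lia|]. simpl.
  destruct (Nat.eq_dec m 0). subst. exists 0%nat. split; [lia|]. simpl. apply Rmax_right. apply Hg.
  destruct IHm as [j [Hj E]]; [lia|].
  destruct (Rle_dec (maxf g m) (g m)).
  - exists m. split; [lia|]. apply Rmax_right; auto.
  - exists j. split; [lia|]. rewrite Rmax_left by lra. auto.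
Qed.

Lemma minimal_arc_exists n x : (1 <= n)%nat -> exists l r, minimal_arc n x l r.
Proof.
  intros Hn.
  set (Lk := fun k => maxf (fun j => ccw (x k) (x j)) n).
  destruct (argmin_nat Lk n Hn) as [k0 [Hk0 Hmin]].
  destruct (maxf_attain (fun j => ccw (x k0) (x j)) n Hn) as [jr [Hjr Er]]; [intros; apply ccw_range|].
  exists (x k0), (x jr). split; [exists k0; auto|]. split; [exists jr; auto|]. split.
  - intros j Hj. unfold in_arc. rewrite <- Er. apply (maxf_ge (fun j => ccw (x k0) (x j))). auto.
  - intros l' L' HL' Hall.
    destruct (argmin_nat (fun j => ccw l' (x j)) n Hn) as [ks [Hks Hm2]].
    assert (Lk ks <= L').
    { apply maxf_le; auto. intros j Hj. rewrite (ccw_rel l').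
      pose proof (Hm2 j Hj). pose proof (Hall j Hj). unfold in_arc in H0.
      pose proof (ccw_range l' (x j)). pose proof (ccw_range l' (x ks)).
      rewrite frac_id; lra. }
    pose proof (Hmin ks Hks). unfold Lk in H0 at 1. rewrite Er in H0. lra.
Qed.

Lemma M_exists n x : (1 <= n)%nat -> exists P, M_out n x P.
Proof.
  intros Hn. destruct (classic (on_one_semicircle n x)) as [Hs|Hs].
  - destruct (minimal_arc_exists n x Hn) as [l [r H]].
    exists [(/4, l); (/4, r); (/2, l + ccw l r / 2)]. left. split; auto.
    exists l, r. split; auto.
  - destruct (sort_exists (map (fun j => antip (x j)) (seq 0 n))) as [s [Hp Hso]].
    exists (rc_of_sorted s). right. split; auto. exists s. auto.
Qed.
Lemma semi_L n x l r : on_one_semicircle n x -> minimal_arc n x l r -> ccw l r <= 1/2.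
Proof.
  intros [c Hc] Hma. destruct Hma as [_ [_ [_ H]]].
  assert (0 <= /2) by lra. specialize (H c (/2) H0 Hc). lra.
Qed.

Lemma Mcases n x P : (1 <= n)%nat -> M_out n x P ->
  (on_one_semicircle n x /\ exists l r, minimal_arc n x l r /\ ccw l r <= 1/2 /\
      P = [(/4, l); (/4, r); (/2, l + ccw l r / 2)]) \/
  (~ on_one_semicircle n x /\ exists a0 t,
      Permutation (a0 :: t) (map (fun j => antip (x j)) (seq 0 n)) /\ Sorted Rle (a0 :: t) /\
      P = rc_of_sorted (a0 :: t) /\ (forall a b, In (a,b) (arcs (a0 :: t)) -> a <= b <= a + 1/2)).
Proof.
  intros Hn [[Hs [l [r [Hma E]]]]|[Hs [s [Hp [Hso E]]]]].
  - left. split; auto. exists l, r. split; auto. split; auto. eapply semi_L; eauto.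
  - right. split; auto. destruct s as [|a0 t].
    + apply Permutation_length in Hp. rewrite length_map, length_seq in Hp. simpl in Hp. lia.
    + exists a0, t. split; auto. split; auto. split; auto. eapply RC_gap; eauto.
Qed.

Lemma truth n x P i : (1 <= n)%nat -> valid_profile n x -> (i < n)%nat -> M_out n x P ->
  (exists j, (j < n)%nat /\ cost P (x i) = dist (x i) (x j) / 2) \/
  (~ on_one_semicircle n x /\ exists j, (j < n)%nat /\ cost P (x i) <= 1/4 - Rsqr (1/2 - dist (x i) (x j))).
Proof.
  intros Hn Hval Hi HM. destruct (Mcases n x P Hn HM) as [[Hs [l [r [Hma [HL E]]]]]|[Hs [a0 [t [Hp [Hso [E Hg]]]]]]].
  - left. subst. apply LRM_truth; auto.
  - right. split; auto. destruct (maxdist_attain x n (x i) Hn) as [j [Hj Ej]].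
    exists j. split; auto. subst. rewrite <- Ej. eapply RC_truth; eauto.
Qed.

Lemma cost_nonneg P z : (forall p q, In (p,q) P -> 0 <= p) -> 0 <= cost P z.
Proof.
  unfold cost, expect. induction P as [|[p q] P IH]; intros H; simpl; [lra|].
  pose proof (H p q (or_introl eq_refl)). pose proof (dist_range z q).
  assert (0 <= fold_right (fun py acc => fst py * dist z (snd py) + acc) 0 P) by (apply IH; intros; eapply H; right; eauto).
  nra.
Qed.

Theorem theorem4 (n : nat) (hn : (1 <= n)%nat) :
  (* M is well defined: it has an output on every profile *)
  (forall x, valid_profile n x -> exists P, M_out n x P) /\
  (* strategyproofness *)
  (forall x i v P P',
      valid_profile n x -> (i < n)%nat -> 0 <= v < 1 ->
      M_out n x P -> M_out n (deviate x i v) P' ->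
      cost P' (x i) >= cost P (x i)) /\
  (* 3/2-approximation of the maximum cost *)
  (forall x P, valid_profile n x -> M_out n x P ->
      forall y, mc n P x <= 3 / 2 * mc_pt n x y).
Proof.
  split; [|split].
  - intros x _. apply M_exists; auto.
  - intros x i v P P' Hval Hi Hv HM HM'.
    set (x' := deviate x i v) in *.
    assert (Hsame : forall j, j <> i -> x' j = x j).
    { intros j Hj. unfold x', deviate. apply Nat.eqb_neq in Hj. rewrite Hj. auto. }
    assert (Hval' : valid_profile n x').
    { intros j Hj. unfold x', deviate. destruct (Nat.eqb j i); auto. }
    set (z := x i). assert (Hz : 0 <= z < 1) by (apply Hval; auto).
    assert (Hd0 : dist z z = 0) by apply dist_refl.
    apply Rle_ge.
    destruct (Mcases n x' P' hn HM') as [[Hs' [l [r [Hma [HL E]]]]]|[Hs' [a0 [t [Hp [Hso [E Hg]]]]]]].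
    +
      assert (Hlb : forall j, (j < n)%nat -> dist z (x' j) <= 2 * cost P' z) by (intros; rewrite E; apply (LRM_lb n x' l r Hma HL); auto).
      assert (Hnn : 0 <= cost P' z) by (pose proof (Hlb i Hi); pose proof (dist_range z (x' i)); lra).
      destruct (truth n x P i hn Hval Hi HM) as [[j [Hj Ec]]|[Hns [j [Hj Ec]]]]; fold z in Ec.
      * rewrite Ec. destruct (Nat.eq_dec j i).
        -- subst j. fold z. rewrite Hd0. lra.
        -- pose proof (Hlb j Hj). rewrite Hsame in H by auto. lra.
      * assert (H14 : 1/4 <= cost P' z).
        { subst P'. apply LRM_far; auto.
          destruct (Rle_dec (ccw l (antip z)) (ccw l r)) as [|Hgt]; auto.
          exfalso. apply Hns. apply (semicircle_switch n x i v l (ccw l r)); auto.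
          destruct Hma as [_ [_ [A _]]]. exact A. unfold z in Hgt. lra. }
        pose proof (Rle_0_sqr (1/2 - dist z (x j))). lra.
    +
      assert (Hlb : forall j, (j < n)%nat -> 1/4 - Rsqr (1/2 - dist z (x' j)) <= cost P' z)
        by (intros; subst P'; eapply RC_lb; eauto).
      assert (Hnn : 0 <= cost P' z).
      { pose proof (Hlb i Hi). pose proof (dist_range z (x' i)). unfold Rsqr in *. nra. }
      destruct (truth n x P i hn Hval Hi HM) as [[j [Hj Ec]]|[Hns [j [Hj Ec]]]]; fold z in Ec.
      * rewrite Ec. destruct (Nat.eq_dec j i).
        -- subst j. fold z. rewrite Hd0. lra.
        -- pose proof (Hlb j Hj). rewrite Hsame in H by auto. pose proof (dist_range z (x j)).
           unfold Rsqr in *. nra.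
      * destruct (Nat.eq_dec j i).
        -- subst j. fold z in Ec. rewrite Hd0 in Ec. unfold Rsqr in Ec. lra.
        -- pose proof (Hlb j Hj). rewrite Hsame in H by auto. lra.
  - intros x P Hval HM y.
    destruct (Mcases n x P hn HM) as [[Hs [l [r [Hma [HL E]]]]]|[Hs [a0 [t [Hp [Hso [E Hg]]]]]]]; subst P.
    + apply LRM_mc; auto.
    + eapply RC_mc; eauto.
Qed.
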